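(* Let $C$ be a coalgebra over a field $K$ and let $(X_i)_{i\in L}$ be a family of nonzero right $C$-comodules such that $\Sigma=\bigoplus_{i\in L}X_i$ is quasi-finite. Then $\bigoplus_{i\in L}X_i=\prod^{C}_{i\in L}X_i$, where $\prod^C$ denotes the product in the category of right $C$-comodules, namely $\prod^C_{i\in L}X_i=\mathrm{Rat}\big(\prod_{i\in L}X_i\big)$ (the rational part of the direct product of left $C^*$-modules).
   Context: A right $C$-comodule $M$ is a left $C^*$-module via $c^*\cdot m=m_0c^*(m_1)$; for a left $C^*$-module $N$, $\mathrm{Rat}(N)$ is the largest submodule whose action arises from a right comodule structure in this way. A right comodule $M$ is quasi-finite if $\mathrm{Hom}^C(S,M)$ is finite dimensional for every simple right comodule $S$; equivalently, if $s(M)=\bigoplus_{l}M_l$ is a decomposition of the socle into simple comodules, then for each simple $S$ only finitely many $M_l$ are isomorphic to $S$. *)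

(* Defs.v *)
(* Since MathComp has no tensor product of
   arbitrary vector spaces, an element of V (x) W is represented by a finite
   list of pairs (its simple tensors), and two such lists are identified when
   they agree on every product of linear functionals f (x) g (this detects
   equality in V (x) W over a field). *)
From Stdlib Require List.
From HB Require Import structures.
From mathcomp Require Import all_boot all_order all_algebra.
Set Implicit Arguments. Unset Strict Implicit. Unset Printing Implicit Defensive.
Import Order.TTheory GRing.Theory Num.Theory.
Local Open Scope ring_scope.

Section Defs.
Variable K : fieldType.

Notation dual V := {linear V -> K^o}.

Definition tensor_eq (V W : lmodType K) (s t : seq (V * W)) : Prop :=
  forall (f : dual V) (g : dual W),
    \sum_(p <- s) ((f p.1 : K) * (g p.2 : K)) =
    \sum_(p <- t) ((f p.1 : K) * (g p.2 : K)).

Record coalgebra (C : lmodType K) := Coalgebra {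
  cDelta : C -> seq (C * C);
  ceps : dual C;
  cDelta_lin : forall (a : K) (x y : C),
    tensor_eq (cDelta (a *: x + y))
      ([seq (a *: p.1, p.2) | p <- cDelta x] ++ cDelta y);
  cDelta_coassoc : forall (c : C) (f g h : dual C),
    \sum_(p <- cDelta c)
        ((\sum_(q <- cDelta p.1) ((f q.1 : K) * (g q.2 : K))) * (h p.2 : K)) =
    \sum_(p <- cDelta c)
        ((f p.1 : K) * (\sum_(q <- cDelta p.2) ((g q.1 : K) * (h q.2 : K))));
  cDelta_counit : forall c : C,
    c = \sum_(p <- cDelta c) ((ceps p.1 : K) *: p.2) /\
    c = \sum_(p <- cDelta c) ((ceps p.2 : K) *: p.1)
}.

Record comodule (C : lmodType K) (cC : coalgebra C) (M : lmodType K) := Comodule {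
  crho : M -> seq (M * C);
  crho_lin : forall (a : K) (x y : M),
    tensor_eq (crho (a *: x + y))
      ([seq (a *: p.1, p.2) | p <- crho x] ++ crho y);
  crho_coassoc : forall (m : M) (f : dual M) (g h : dual C),
    \sum_(p <- crho m)
        ((\sum_(q <- crho p.1) ((f q.1 : K) * (g q.2 : K))) * (h p.2 : K)) =
    \sum_(p <- crho m)
        ((f p.1 : K) * (\sum_(q <- cDelta cC p.2) ((g q.1 : K) * (h q.2 : K))));
  crho_counit : forall m : M, m = \sum_(p <- crho m) ((ceps cC p.2 : K) *: p.1)
}.

Variables (C : lmodType K) (cC : coalgebra C).

Definition cact (M : lmodType K) (rM : comodule cC M) (cs : dual C) (m : M) : M :=
  \sum_(p <- crho rM m) ((cs p.2 : K) *: p.1).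

Definition comod_map (A B : lmodType K) (rA : comodule cC A) (rB : comodule cC B)
  (g : A -> B) : Prop :=
  (forall (a : K) (x y : A), g (a *: x + y) = a *: g x + g y) /\
  (forall x : A, tensor_eq [seq (g p.1, p.2) | p <- crho rA x] (crho rB (g x))).

Definition subcomod (M : lmodType K) (rM : comodule cC M) (P : M -> Prop) : Prop :=
  P 0 /\ (forall (a : K) (x y : M), P x -> P y -> P (a *: x + y)) /\
  (forall x : M, P x -> exists t : seq (M * C),
       tensor_eq (crho rM x) t /\ (forall p, List.In p t -> P p.1)).

Definition simple_comod (M : lmodType K) (rM : comodule cC M) : Prop :=
  (exists m : M, m <> 0) /\
  (forall P : M -> Prop, subcomod rM P ->
     (forall m, P m -> m = 0) \/ (forall m, P m)).

Variables (L : Type) (X : L -> lmodType K) (rX : forall i, comodule cC (X i)).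

(* finite support: x lies in the direct sum (+)_i X_i, viewed inside prod_i X_i *)
Definition fin_supp (x : forall i, X i) : Prop :=
  exists s : seq L, forall i, x i <> 0 -> List.In i s.

(* Hom^C(S, (+)_i X_i): comodule maps into the direct sum (whose coaction is
   componentwise), i.e. linear maps S -> prod_i X_i with finitely supported
   values whose components are comodule maps S -> X_i. *)
Definition dsum_hom (S : lmodType K) (rS : comodule cC S)
  (f : S -> forall i, X i) : Prop :=
  (forall s, fin_supp (f s)) /\ (forall i, comod_map rS (rX i) (fun s => f s i)).

(* (+)_i X_i is quasi-finite: Hom^C(S, (+)_i X_i) is finite dimensional for
   every simple right comodule S (spanned by finitely many elements). *)
Definition quasi_finite_dsum : Prop :=
  forall (S : lmodType K) (rS : comodule cC S), simple_comod rS ->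
    exists fs : seq (S -> forall i, X i),
      (forall f, List.In f fs -> dsum_hom rS f) /\
      (forall f, dsum_hom rS f ->
         exists cs : seq K, size cs = size fs /\
           forall s i, f s i = \sum_(p <- zip cs fs) (p.1 *: p.2 s i)).

(* The C^*-module prod_i X_i (componentwise action).  x belongs to
   Rat(prod_i X_i) iff x lies in some C^*-submodule whose C^*-action comes
   from a right comodule structure, i.e. x is in the image of an injective
   C^*-linear map phi : M -> prod_i X_i from a right comodule M. *)
Definition in_Rat_prod (x : forall i, X i) : Prop :=
  exists (M : lmodType K) (rM : comodule cC M) (phi : M -> forall i, X i),
    (forall (a : K) (m m' : M) i, phi (a *: m + m') i = a *: phi m i + phi m' i) /\
    (forall m m' : M, (forall i, phi m i = phi m' i) -> m = m') /\
    (forall (cs : dual C) (m : M) i, phi (cact rM cs m) i = cact (rX i) cs (phi m i)) /\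
    (exists m : M, forall i, phi m i = x i).

End Defs.

(* Main.v *)
Require Import Defs.
From Stdlib Require List.
From HB Require Import structures.
From mathcomp Require Import all_boot all_order all_algebra.
From mathcomp Require Import boolp classical_sets.
Local Open Scope ring_scope.

Module Aux.
Set Implicit Arguments. Unset Strict Implicit. Unset Printing Implicit Defensive.
Import Order.TTheory GRing.Theory.
Local Open Scope ring_scope.

Section Ext.
Variables (K : fieldType) (V : lmodType K).
Local Open Scope classical_set_scope.

Definition mklin (f : V -> K^o) (H : linear f) : {linear V -> K^o} :=
  HB.pack f (GRing.isLinear.Build K V K^o *:%R f H).

Lemma mklinE f H x : @mklin f H x = f x. Proof. by []. Qed.

Lemma lfZ (f : {linear V -> K^o}) a x : (f (a *: x) : K) = a * f x.
Proof. by rewrite linearZ. Qed.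
Lemma lfD (f : {linear V -> K^o}) x y : (f (x + y) : K) = f x + f y.
Proof. by rewrite linearD. Qed.

Definition goodG (G : set (V * K)) :=
  [/\ (forall x k k', G (x,k) -> G (x,k') -> k = k'),
      (forall a x y k l, G (x,k) -> G (y,l) -> G (a *: x + y, a * k + l)) &
      G (0, 0)].

Lemma good_ext (G : set (V * K)) v : goodG G -> (forall k, ~ G (v, k)) ->
  goodG (fun p => exists y a, G (y, p.2) /\ p.1 = y + a *: v).
Proof.
move=> [fG lG zG] nv; split.
- move=> x k k' [y [a [Gy /= ->]]] [y' [a' [Gy' /= e]]].
  have [ea|nea] := eqVneq a a'.
    by move: e; rewrite ea => /addIr ey; apply: (fG y); rewrite // ey.
  exfalso; have : G (y' - y, k' - k).
    by have := lG (-1) _ _ _ _ Gy Gy'; rewrite !scaleN1r mulN1r addrC [_ + k']addrC.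
  move=> /(fun H => lG ((a - a')^-1) _ _ _ _ H zG); rewrite !addr0.
  have -> : (a - a')^-1 *: (y' - y) = v.
    have ha : a - a' != 0 by rewrite subr_eq0.
    apply: (@scalerI _ _ (a - a')) => //; rewrite scalerA mulfV // scale1r.
    have -> : y' = y + a *: v - a' *: v by rewrite e addrK.
    by rewrite addrAC [y + _]addrC addrK scalerBl.
  by apply: nv.
- move=> b x x' k k' [y [a [Gy /= ->]]] [y' [a' [Gy' /= ->]]].
  exists (b *: y + y'), (b * a + a'); split; first exact: lG.
  by rewrite /= scalerDr scalerA scalerDl addrACA.
- by exists 0, 0; rewrite /= scale0r !addr0.
Qed.

Lemma ext_lin (P : V -> Prop) (phi : V -> K) :
  P 0 -> (forall a x y, P x -> P y -> P (a *: x + y)) ->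
  (forall a x y, P x -> P y -> phi (a *: x + y) = a * phi x + phi y) ->
  exists F : {linear V -> K^o}, forall x, P x -> F x = phi x.
Proof.
move=> P0 Pl phil.
have phi0 : phi 0 = 0.
  by have := phil 1 0 0 P0 P0; rewrite scale1r addr0 mul1r => /eqP; rewrite addrC -subr_eq subrr eq_sym => /eqP.
pose G0 : set (V * K) := fun p => P p.1 /\ p.2 = phi p.1.
have gG0 : goodG G0.
  split.
  - by move=> x k k' [_ /= ->] [_ /= ->].
  - move=> a x y k l [Px /= ->] [Py /= ->]; split; first exact: Pl.
    by rewrite /= phil.
  - by split; rewrite //= phi0.
pose Pg := fun G : set (V * K) => goodG (G `|` G0).
have [A [gA maxA]] : exists A, Pg A /\ forall B, (A `<` B) -> ~ Pg B.
  apply: Zorn_bigcup => F FP tF.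
  set U := (\bigcup_(X in F) X) `|` G0.
  have lift : forall p q, U p -> U q -> exists H, [/\ goodG H, H p, H q & H `<=` U].
    have sub : forall X, F X -> X `|` G0 `<=` U.
      move=> X FX z [Xz|Gz]; [left; exists X => // | by right].
    move=> p q [[X FX Xp]|Gp] [[Y FY Yq]|Gq].
    - have [XY|YX] := tF X Y FX FY.
      + exists (Y `|` G0); split; [exact: FP| left; exact: XY| by left | exact: sub].
      + exists (X `|` G0); split; [exact: FP| by left | left; exact: YX | exact: sub].
    - exists (X `|` G0); split; [exact: FP| by left | by right | exact: sub].
    - exists (Y `|` G0); split; [exact: FP| by right | by left | exact: sub].
    - exists G0; split => //; by move=> z Gz; right.
  split.
  - move=> x k k' Uk Uk'; have [H [[fH _ _] Hp Hq _]] := lift _ _ Uk Uk'.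
    exact: fH Hp Hq.
  - move=> a x y k l Ux Uy; have [H [[_ lH _] Hp Hq sH]] := lift _ _ Ux Uy.
    exact/sH/lH.
  - by right; case: gG0.
have tot : forall x, exists k, (A `|` G0) (x, k).
  move=> v; apply: contrapT => nv.
  have nv' : forall k, ~ (A `|` G0) (v, k) by move=> k H; apply: nv; exists k.
  pose B := fun p : V * K => exists y a, (A `|` G0) (y, p.2) /\ p.1 = y + a *: v.
  have gB := good_ext gA nv'.
  have AB : A `|` G0 `<=` B.
    by move=> [y k] H; exists y, 0; split => //=; rewrite scale0r addr0.
  apply: (maxA B).
  - split; first by move=> p Ap; apply: AB; left.
    move=> BA; apply: (nv' 0); left; apply: BA.
    exists 0, 1; split; first by case: gA.
    by rewrite /= scale1r add0r.
  - rewrite /Pg; have -> : B `|` G0 = B.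
      by apply/seteqP; split => [p [//|Gp]|p Bp]; [apply: AB; right | left].
    exact: gB.
pose F := fun x => sval (cid (tot x)).
have FP x : (A `|` G0) (x, F x) by rewrite /F; case: cid.
case: gA => fA lA zA.
have Flin : linear (F : V -> K^o).
  move=> a x y; apply: (fA (a *: x + y)); first exact: FP.
  exact: lA (FP x) (FP y).
exists (mklin Flin) => x Px; rewrite mklinE.
by apply: (fA x); [exact: FP | right].
Qed.


Definition lc (r : nat) (e : 'I_r -> V) (a : 'rV[K]_r) : V := \sum_j a 0 j *: e j.

Lemma lc_lin r (e : 'I_r -> V) b a a' : lc e (b *: a + a') = b *: lc e a + lc e a'.
Proof.
rewrite /lc scaler_sumr -big_split; apply: eq_bigr => j _.
by rewrite !mxE scalerDl scalerA.
Qed.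

Lemma lcB r (e : 'I_r -> V) a a' : lc e (a - a') = lc e a - lc e a'.
Proof.
rewrite /lc -sumrB; apply: eq_bigr => j _.
by rewrite !mxE scalerBl.
Qed.

Lemma lc0 r (e : 'I_r -> V) : lc e 0 = 0.
Proof. by rewrite /lc big1 // => j _; rewrite mxE scale0r. Qed.



Lemma lc_delta r (e : 'I_r -> V) k : lc e (delta_mx 0 k) = e k.
Proof.
rewrite /lc (bigD1 k) //= big1 ?addr0 => [|j nj]; rewrite mxE !eqxx /=.
  by rewrite scale1r.
by rewrite (negbTE nj) scale0r.
Qed.

Lemma dual_basis r (e : 'I_r -> V) : (forall a, lc e a = 0 -> a = 0) ->
  exists d : 'I_r -> {linear V -> K^o}, forall j k, d j (e k) = (j == k)%:R.
Proof.
move=> ind.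
have inj : injective (lc e).
  move=> a b eab; apply/eqP; rewrite -subr_eq0; apply/eqP/ind.
  by rewrite lcB eab subrr.
pose P w := exists a, w = lc e a.
pose coef w : 'rV[K]_r := if pselect (P w) is left H then sval (cid H) else 0.
have coefE a : coef (lc e a) = a.
  rewrite /coef; case: pselect => [H|nH]; last by exfalso; apply: nH; exists a.
  by case: cid => a' /= /inj ->.
have H : forall j, exists F : {linear V -> K^o}, forall x, P x -> F x = coef x 0 j.
  move=> j; apply: ext_lin.
  - by exists 0; rewrite lc0.
  - by move=> c x y [a ->] [b ->]; exists (c *: a + b); rewrite lc_lin.
  - by move=> c x y [a ->] [b ->]; rewrite -lc_lin !coefE !mxE.
pose d j := sval (cid (H j)).
exists d => j k; rewrite /d; case: cid => F /= HF.
rewrite HF; last by exists (delta_mx 0 k); rewrite lc_delta.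
by rewrite -lc_delta coefE mxE eqxx /= eq_sym.
Qed.

Lemma sepV (x y : V) : (forall f : {linear V -> K^o}, f x = f y) -> x = y.
Proof.
move=> H; apply: contrapT => /eqP nxy.
have [|d Hd] := @dual_basis 1 (fun _ => x - y).
  move=> a; rewrite /lc big_ord1 => /eqP; rewrite scaler_eq0 subr_eq0 (negbTE nxy) orbF.
  by move=> /eqP a0; apply/rowP => j; rewrite ord1 mxE a0.
have := Hd 0 0; rewrite eqxx linearB /= H subrr => /eqP; rewrite eq_sym oner_eq0.
by [].
Qed.

Lemma tensor_act (W : lmodType K) (s t : seq (V * W)) : tensor_eq s t ->
  forall g : {linear W -> K^o},
  \sum_(p <- s) (g p.2 : K) *: p.1 = \sum_(p <- t) (g p.2 : K) *: p.1.
Proof.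
move=> H g; apply: sepV => f; rewrite !linear_sum.
transitivity (\sum_(p <- s) (f p.1 : K) * g p.2).
  by apply: eq_bigr => p _; rewrite linearZ /= mulrC.
rewrite H; apply: eq_bigr => p _; by rewrite linearZ /= mulrC.
Qed.

End Ext.


Section Comod.
Variables (K : fieldType) (C : lmodType K) (cC : coalgebra C).

Lemma lin_scaleE (a b : K) : a *: (b : K^o) = a * b. Proof. by []. Qed.

Lemma tz (M : lmodType K) (rM : comodule cC M) (f : {linear M -> K^o}) (g : {linear C -> K^o}) :
  \sum_(p <- crho rM 0) (f p.1 : K) * g p.2 = 0.
Proof.
have := crho_lin rM 1 0 0 f g; rewrite scale1r addr0 big_cat big_map /=.
rewrite [X in _ = X + _ -> _](eq_bigr (fun p => (f p.1 : K) * g p.2)); last by move=> p _ /=; rewrite linearZ /= lin_scaleE mul1r.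
move=> h; apply: (@addrI _ (\sum_(p <- crho rM 0) (f p.1 : K) * g p.2)).
by rewrite addr0 -{1}h.
Qed.

Lemma cact_lin (M : lmodType K) (rM : comodule cC M) (g : {linear C -> K^o}) :
  linear (cact rM g).
Proof.
move=> a x y; rewrite /cact (tensor_act (crho_lin rM a x y)) big_cat big_map scaler_sumr.
congr (_ + _); apply: eq_bigr => p _ /=.
by rewrite scalerA mulrC -scalerA.
Qed.

Definition cactL (M : lmodType K) (rM : comodule cC M) (g : {linear C -> K^o}) : {linear M -> M} :=
  HB.pack (cact rM g) (GRing.isLinear.Build K M M *:%R (cact rM g) (cact_lin rM g)).

Lemma cactLE (M : lmodType K) (rM : comodule cC M) g x : @cactL M rM g x = cact rM g x. Proof. by []. Qed.

Lemma cact0 (M : lmodType K) (rM : comodule cC M) g : cact rM g (0 : M) = 0.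
Proof. by rewrite -cactLE linear0. Qed.
Lemma cactD (M : lmodType K) (rM : comodule cC M) g (x y : M) : cact rM g (x + y) = cact rM g x + cact rM g y.
Proof. by rewrite -!cactLE linearD. Qed.
Lemma cactZ (M : lmodType K) (rM : comodule cC M) g a (x : M) : cact rM g (a *: x) = a *: cact rM g x.
Proof. by rewrite -!cactLE linearZ. Qed.
Lemma cactB (M : lmodType K) (rM : comodule cC M) g (x y : M) : cact rM g (x - y) = cact rM g x - cact rM g y.
Proof. by rewrite -!cactLE linearB. Qed.
Lemma cact_sum (M : lmodType K) (rM : comodule cC M) g I (s : seq I) (F : I -> M) :
  cact rM g (\sum_(i <- s) F i) = \sum_(i <- s) cact rM g (F i).
Proof. by rewrite -!cactLE linear_sum. Qed.

Lemma lf_cact (M : lmodType K) (rM : comodule cC M) g (f : {linear M -> K^o}) m :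
  (f (cact rM g m) : K) = \sum_(p <- crho rM m) (f p.1 : K) * g p.2.
Proof.
rewrite /cact linear_sum; apply: eq_bigr => p _.
by rewrite linearZ /= mulrC.
Qed.

Lemma cact_eps (M : lmodType K) (rM : comodule cC M) (m : M) : cact rM (ceps cC) m = m.
Proof. by rewrite /cact -crho_counit. Qed.

Definition conv_fun (g h : {linear C -> K^o}) (c : C) : K^o :=
  \sum_(p <- cDelta cC c) (g p.1 : K) * h p.2.

Lemma conv_lin g h : linear (conv_fun g h).
Proof.
move=> a x y; rewrite /conv_fun (cDelta_lin cC a x y g h) big_cat big_map.
congr (_ + _); rewrite lin_scaleE mulr_sumr; apply: eq_bigr => p _ /=.
by rewrite linearZ /= mulrA.
Qed.

Definition conv g h : {linear C -> K^o} := mklin (conv_lin g h).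

Lemma cact_conv (M : lmodType K) (rM : comodule cC M) g h (m : M) :
  cact rM g (cact rM h m) = cact rM (conv g h) m.
Proof.
apply: sepV => f.
rewrite [in RHS]lf_cact.
have -> : cact rM h m = \sum_(p <- crho rM m) (h p.2 : K) *: p.1 by [].
rewrite cact_sum linear_sum /=.
have := crho_coassoc rM m f g h => /= E.
transitivity (\sum_(p <- crho rM m)
        ((\sum_(q <- crho rM p.1) ((f q.1 : K) * (g q.2 : K))) * (h p.2 : K))).
  by apply: eq_bigr => p _; rewrite cactZ linearZ /= lf_cact mulrC.
by rewrite E.
Qed.

Lemma lcomb_lin (a : K) (g h : {linear C -> K^o}) : linear (fun c : C => (a * g c + h c : K^o)).
Proof.
move=> b x y; rewrite !linearD !linearZ /= !lin_scaleE.
by rewrite mulrDr !mulrA [a * b]mulrC addrACA.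
Qed.
Definition lcomb a g h : {linear C -> K^o} := mklin (lcomb_lin a g h).

Lemma cact_lcomb (M : lmodType K) (rM : comodule cC M) a g h (m : M) :
  cact rM (lcomb a g h) m = a *: cact rM g m + cact rM h m.
Proof.
rewrite /cact scaler_sumr -big_split; apply: eq_bigr => p _ /=.
by rewrite scalerDl scalerA.
Qed.

Lemma zero_lin : linear (fun c : C => (0 : K^o)).
Proof. by move=> a x y; rewrite lin_scaleE mulr0 addr0. Qed.
Definition zerof : {linear C -> K^o} := mklin zero_lin.

Lemma cact_zerof (M : lmodType K) (rM : comodule cC M) (m : M) : cact rM zerof m = 0.
Proof. by rewrite /cact big1 // => p _; rewrite /= scale0r. Qed.

End Comod.


Section LcLin.
Variables (K : fieldType) (V : lmodType K) (r : nat) (e : 'I_r -> V).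
Definition lcL : {linear 'rV[K]_r -> V} :=
  HB.pack (lc e) (GRing.isLinear.Build K 'rV[K]_r V *:%R (lc e) (@lc_lin K V r e)).
Lemma lcLE a : lcL a = lc e a. Proof. by []. Qed.
Lemma lc_sum I (s : seq I) (F : I -> 'rV[K]_r) : lc e (\sum_(i <- s) F i) = \sum_(i <- s) lc e (F i).
Proof. by rewrite -lcLE linear_sum. Qed.
Lemma lcZ b a : lc e (b *: a) = b *: lc e a.
Proof. by rewrite -!lcLE linearZ. Qed.
Lemma lcD a b : lc e (a + b) = lc e a + lc e b.
Proof. by rewrite -!lcLE linearD. Qed.
End LcLin.

Section MatComod.
Variables (K : fieldType) (C : lmodType K) (cC : coalgebra C).
Variables (V : lmodType K) (rV : comodule cC V) (r : nat) (e : 'I_r -> V)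
  (d : 'I_r -> {linear V -> K^o}).
Hypothesis dE : forall j k, d j (e k) = (j == k)%:R.
Hypothesis stab : forall g k, exists a, cact rV g (e k) = lc e a.

Lemma d_lc j a : (d j (lc e a) : K) = a 0 j.
Proof.
rewrite /lc linear_sum (bigD1 j) //= big1 ?addr0 => [|k nk].
  by rewrite linearZ /= dE eqxx lin_scaleE mulr1.
by rewrite linearZ /= dE eq_sym (negbTE nk) lin_scaleE mulr0.
Qed.

Lemma lc_inj : injective (lc e).
Proof. by move=> a b eab; apply/rowP => j; rewrite -!d_lc eab. Qed.

Lemma span_proj a : lc e a = \sum_j (d j (lc e a) : K) *: e j.
Proof. by rewrite {1}/lc; apply: eq_bigr => j _; rewrite d_lc. Qed.

Lemma stab_span g a : exists b, cact rV g (lc e a) = lc e b.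
Proof.
have H k := cid (stab g k).
exists (\sum_k a 0 k *: sval (H k)).
rewrite lc_sum {1}/lc cact_sum; apply: eq_bigr => k _.
by rewrite cactZ lcZ; case: (H k) => b /= ->.
Qed.

Lemma span_cact g a : cact rV g (lc e a) = \sum_j (d j (cact rV g (lc e a)) : K) *: e j.
Proof. by have [b ->] := stab_span g a; rewrite -span_proj. Qed.

Definition cm j k : C := \sum_(q <- crho rV (e k)) (d j q.1 : K) *: q.2.
Definition cS (a : 'rV[K]_r) j : C := \sum_k a 0 k *: cm j k.
Definition rhoS (a : 'rV[K]_r) : seq ('rV[K]_r * C) :=
  [seq (delta_mx 0 j, cS a j) | j <- index_enum 'I_r].

Lemma rhoS_sum (R : nmodType) (F : 'rV[K]_r * C -> R) a :
  \sum_(p <- rhoS a) F p = \sum_j F (delta_mx 0 j, cS a j).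
Proof. by rewrite big_map. Qed.

Lemma g_cm (g : {linear C -> K^o}) j k : (g (cm j k) : K) = d j (cact rV g (e k)).
Proof.
rewrite lf_cact /cm linear_sum; apply: eq_bigr => q _.
by rewrite linearZ.
Qed.

Lemma g_cS (g : {linear C -> K^o}) a j : (g (cS a j) : K) = d j (cact rV g (lc e a)).
Proof.
rewrite /cS /lc linear_sum cact_sum linear_sum; apply: eq_bigr => k _.
by rewrite linearZ /= g_cm cactZ linearZ.
Qed.

Lemma cS_lin b a a' j : cS (b *: a + a') j = b *: cS a j + cS a' j.
Proof.
rewrite /cS scaler_sumr -big_split; apply: eq_bigr => k _.
by rewrite !mxE scalerDl scalerA.
Qed.

Lemma cS_delta j l : cS (delta_mx 0 j) l = cm l j.
Proof.
rewrite /cS (bigD1 j) //= big1 ?addr0 => [|k nk]; rewrite mxE !eqxx /=.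
  by rewrite scale1r.
by rewrite (negbTE nk) scale0r.
Qed.

Lemma rhoS_lin (b : K) (x y : 'rV[K]_r) :
  tensor_eq (rhoS (b *: x + y)) ([seq (b *: p.1, p.2) | p <- rhoS x] ++ rhoS y).
Proof.
move=> f g; rewrite big_cat /= [X in _ = X + _]big_map !rhoS_sum -big_split; apply: eq_bigr => j _ /=.
rewrite cS_lin linearD linearZ /= linearZ /= !lin_scaleE.
by rewrite mulrDr !mulrA [_ * b]mulrC.
Qed.

Lemma key (g h : {linear C -> K^o}) a j :
  (conv cC g h (cS a j) : K) = \sum_l (g (cm j l) : K) * h (cS a l).
Proof.
rewrite g_cS -cact_conv.
have -> : \sum_l (g (cm j l) : K) * h (cS a l) =
   d j (cact rV g (\sum_l (d l (cact rV h (lc e a)) : K) *: e l)).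
  rewrite cact_sum linear_sum; apply: eq_bigr => l _.
  by rewrite g_cm g_cS cactZ linearZ /= mulrC.
by rewrite -span_cact.
Qed.

Lemma rhoS_coassoc (a : 'rV[K]_r) (f : {linear 'rV[K]_r -> K^o}) (g h : {linear C -> K^o}) :
    \sum_(p <- rhoS a)
        ((\sum_(q <- rhoS p.1) ((f q.1 : K) * (g q.2 : K))) * (h p.2 : K)) =
    \sum_(p <- rhoS a)
        ((f p.1 : K) * (\sum_(q <- cDelta cC p.2) ((g q.1 : K) * (h q.2 : K)))).
Proof.
rewrite !rhoS_sum /=.
under eq_bigr do rewrite rhoS_sum /= mulr_suml.
rewrite exchange_big /=; apply: eq_bigr => l _.
have -> : \sum_(q <- cDelta cC (cS a l)) (g q.1 : K) * (h q.2 : K) = conv cC g h (cS a l) by [].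
rewrite key mulr_sumr; apply: eq_bigr => j _.
by rewrite cS_delta mulrA.
Qed.

Lemma rhoS_counit (a : 'rV[K]_r) : a = \sum_(p <- rhoS a) ((ceps cC p.2 : K) *: p.1).
Proof.
rewrite rhoS_sum {1}(row_sum_delta a); apply: eq_bigr => j _ /=.
by rewrite g_cS cact_eps d_lc.
Qed.

Definition rS : comodule cC 'rV[K]_r :=
  Comodule rhoS_lin rhoS_coassoc rhoS_counit.

Lemma lc_cactS g a : lc e (cact rS g a) = cact rV g (lc e a).
Proof.
rewrite /cact /= rhoS_sum lc_sum.
rewrite [RHS](span_cact g a) /cact; apply: eq_bigr => j _ /=.
by rewrite lcZ lc_delta g_cS.
Qed.

End MatComod.


Section Dim.
Variables (K : fieldType) (n : nat).
Implicit Types W : 'rV[K]_n -> Prop.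

Definition subsp W := W 0 /\ forall a x y, W x -> W y -> W (a *: x + y).
Definition DimGe W r := exists A : 'M[K]_(r, n), row_free A /\ forall j, W (row j A).

Lemma dimge_le W r : DimGe W r -> (r <= n)%N.
Proof. by move=> [A [fA _]]; move/eqP: fA => <-; exact: rank_leq_col. Qed.

Lemma dimge0 W : DimGe W 0.
Proof. by exists 0; split; [rewrite /row_free mxrank0 | case]. Qed.

Definition dimW W : nat :=
  ex_maxn (P := fun k => `[< DimGe W k >]) (ex_intro _ 0%N (asboolT (dimge0 W)))
    (fun k Hk => dimge_le (asboolW Hk)).

Lemma dimW_spec W : DimGe W (dimW W) /\ forall k, DimGe W k -> (k <= dimW W)%N.
Proof.
rewrite /dimW; case: ex_maxnP => m /asboolP Hm Hmax; split => // k Hk.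
exact/Hmax/asboolP.
Qed.

Lemma subsp_sum W I (s : seq I) (c : I -> K) (F : I -> 'rV[K]_n) :
  subsp W -> (forall i, W (F i)) -> W (\sum_(i <- s) c i *: F i).
Proof.
move=> [W0 Wl] WF; apply: big_ind => //.
  by move=> x y Wx Wy; have := Wl 1 _ _ Wx Wy; rewrite scale1r.
by move=> i _; have := Wl (c i) _ _ (WF i) W0; rewrite addr0.
Qed.

Lemma max_sub W (A : 'M[K]_(dimW W, n)) : subsp W -> row_free A ->
  (forall j, W (row j A)) -> forall b, W b -> (b <= A)%MS.
Proof.
move=> sW fA WA b Wb; apply: contraT => nb.
have : DimGe W (dimW W + 1) .
  exists (col_mx A b); split.
    rewrite /row_free -addsmxE.
    have lt : (A < A + b)%MS by rewrite ltmxE addsmxSl addsmx_sub submx_refl (negbTE nb).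
    move: lt; rewrite ltmxErank => /andP [_ lt].
    move/eqP: fA => fA; rewrite fA in lt.
    rewrite eqn_leq addn1 lt andbT.
    by rewrite addsmxE (leq_trans (rank_leq_row _)) // addn1.
  move=> j; rewrite -(splitK j); case: (split j) => j' /=; first by rewrite rowKu.
  by rewrite rowKd row_id.
by move/(proj2 (dimW_spec W)); rewrite addn1 ltnn.
Qed.

Lemma in_span W (A : 'M[K]_(dimW W, n)) b : subsp W -> (forall j, W (row j A)) ->
  (b <= A)%MS -> W b.
Proof.
move=> sW WA bA; rewrite -(mulmxKpV bA) mulmx_sum_row.
exact: subsp_sum.
Qed.

Lemma dim_mono W W' : (forall b, W b -> W' b) -> (dimW W <= dimW W')%N.
Proof.
move=> WW'; have [[A [fA WA]] _] := dimW_spec W.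
apply: (proj2 (dimW_spec W')); exists A; split => // j; exact: WW'.
Qed.

Lemma dim_strict W W' : subsp W -> (forall b, W b -> W' b) ->
  (exists b, W' b /\ ~ W b) -> (dimW W < dimW W')%N.
Proof.
move=> sW WW' [b [W'b nWb]].
have [[A [fA WA]] _] := dimW_spec W.
have nb : ~~ (b <= A)%MS by apply/negP => bA; apply: nWb; exact: (in_span sW WA bA).
have : DimGe W' (dimW W + 1) .
  exists (col_mx A b); split.
    rewrite /row_free -addsmxE.
    have lt : (A < A + b)%MS by rewrite ltmxE addsmxSl addsmx_sub submx_refl (negbTE nb).
    move: lt; rewrite ltmxErank => /andP [_ lt].
    move/eqP: fA => fA; rewrite fA in lt.
    rewrite eqn_leq addn1 lt andbT.
    by rewrite addsmxE (leq_trans (rank_leq_row _)) // addn1.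
  move=> j; rewrite -(splitK j); case: (split j) => j' /=; first by rewrite rowKu; apply: WW'.
  by rewrite rowKd row_id.
by move/(proj2 (dimW_spec W')); rewrite addn1.
Qed.

End Dim.


Section Extract.
Variables (K : fieldType) (V : lmodType K).

Definition lcs (t : seq V) (a : 'rV[K]_(size t)) : V := lc (fun j : 'I_(size t) => t`_j) a.

Arguments lcs : clear implicits.

Definition mkrow n (c : K) (b : 'rV[K]_n) : 'rV[K]_n.+1 :=
  \row_j (if unlift ord0 j is Some j' then b 0 j' else c).

Lemma mkrow0 n c (b : 'rV[K]_n) : mkrow c b 0 ord0 = c.
Proof. by rewrite mxE unlift_none. Qed.
Lemma mkrowS n c (b : 'rV[K]_n) j : mkrow c b 0 (lift ord0 j) = b 0 j.
Proof. by rewrite mxE liftK. Qed.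

Lemma lcs_cons w (t : seq V) (a : 'rV[K]_(size t).+1) :
  lcs (w :: t) a = a 0 ord0 *: w + lcs t (\row_j a 0 (lift ord0 j)).
Proof.
rewrite /lcs /lc big_ord_recl /=; congr (_ + _).
by apply: eq_bigr => j _; rewrite mxE.
Qed.

Lemma lcs_mk w (t : seq V) c b : lcs (w :: t) (mkrow c b) = c *: w + lcs t b.
Proof.
rewrite lcs_cons mkrow0; congr (_ + _); congr lcs.
by apply/rowP => j; rewrite !mxE liftK.
Qed.

Lemma extract (s : seq V) : exists t : seq V,
  [/\ {subset t <= s}, (forall a, lcs t a = 0 -> a = 0) &
      (forall w, w \in s -> exists a : 'rV[K]_(size t), w = lcs t a)].
Proof.
elim: s => [|w s [t [ts ind sp]]].
  exists [::]; split => //.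
  by move=> a _; apply/rowP => -[].
have [[a wa]|nw] := pselect (exists a : 'rV[K]_(size t), w = lcs t a).
  exists t; split.
  - by move=> x /ts xs; rewrite inE xs orbT.
  - exact: ind.
  - by move=> x; rewrite inE => /orP [/eqP ->|/sp //]; exists a.
exists (w :: t); split.
- move=> x; rewrite !inE => /orP [->//|/ts ->]; by rewrite orbT.
- move=> a; rewrite lcs_cons => H.
  have a0 : a 0 ord0 = 0.
    apply: contrapT => /eqP na; apply: nw.
    exists (- (a 0 ord0)^-1 *: \row_j a 0 (lift ord0 j)).
    rewrite /lcs lcZ -/(lcs t _).
    apply: (@scalerI _ _ (a 0 ord0)) => //.
    rewrite scalerA mulrN mulfV // scaleN1r; apply/eqP.
    by rewrite -addr_eq0 H.
  move: H; rewrite a0 scale0r add0r => /ind H.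
  apply/rowP => j; case: (unliftP ord0 j) => [j' ->|->]; last by rewrite a0 mxE.
  by have := congr1 (fun m : 'rV[K]_(size t) => m 0 j') H; rewrite !mxE.
- move=> x; rewrite inE => /orP [/eqP ->|/sp [b ->]].
    by exists (mkrow 1 0); rewrite lcs_mk scale1r /lcs lc0 addr0.
  by exists (mkrow 0 b); rewrite lcs_mk scale0r add0r.
Qed.

End Extract.


Arguments lcs {K V} t a.

Lemma ex_min (P : nat -> Prop) : (exists k, P k) -> exists k, P k /\ forall j, P j -> (k <= j)%N.
Proof.
move=> [k Pk].
have ex : exists k, `[< P k >] by exists k; exact: asboolT.
case: (ex_minnP ex) => m /asboolP Pm Hm; exists m; split => // j Pj.
exact/Hm/asboolT.
Qed.

Lemma ex_max (P : nat -> Prop) B : (exists k, P k) -> (forall k, P k -> (k <= B)%N) ->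
  exists k, P k /\ forall j, P j -> (j <= k)%N.
Proof.
move=> [k Pk] HB.
have ex : exists k, `[< P k >] by exists k; exact: asboolT.
have ub : forall i, `[< P i >] -> (i <= B)%N by move=> i /asboolP /HB.
case: (ex_maxnP ex ub) => m /asboolP Pm Hm; exists m; split => // j Pj.
exact/Hm/asboolT.
Qed.

Lemma pick_distinct (L : Type) (J : L -> Prop) (J_inf : forall s : seq L, exists i, J i /\ ~ List.In i s) N : exists (idx : nat -> L) (s : seq L),
  [/\ forall j, (j < N)%N -> J (idx j),
      forall j j', (j < N)%N -> (j' < N)%N -> idx j = idx j' -> j = j' &
      forall j, (j < N)%N -> List.In (idx j) s].
Proof.
elim: N => [|N [idx [s [H1 H2 H3]]]].
  have [i _] := J_inf [::].
  by exists (fun _ => i), [::]; split.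
have [i [Ji ni]] := J_inf s.
exists (fun j => if j == N then i else idx j), (i :: s); split.
- move=> j; rewrite ltnS leq_eqVlt => /orP [/eqP ->|jN]; first by rewrite eqxx.
  by rewrite (ltn_eqF jN); exact: H1.
- move=> j j'; rewrite ltnS leq_eqVlt.
  case/orP => [/eqP ->|jN]; rewrite ltnS leq_eqVlt; case/orP => [/eqP ->|j'N] //.
  + rewrite eqxx (ltn_eqF j'N) => e; exfalso; apply: ni; rewrite e; exact: H3.
  + rewrite eqxx (ltn_eqF jN) => e; exfalso; apply: ni; rewrite -e; exact: H3.
  + rewrite (ltn_eqF jN) (ltn_eqF j'N); exact: H2.
- move=> j; rewrite ltnS leq_eqVlt => /orP [/eqP ->|jN]; first by rewrite eqxx; left.
  by rewrite (ltn_eqF jN); right; exact: H3.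
Qed.

Section Main1.
Variables (K : fieldType) (C : lmodType K) (cC : coalgebra C).
Variables (L : Type) (X : L -> lmodType K) (rX : forall i, comodule cC (X i)).
Variables (M : lmodType K) (rM : comodule cC M) (phi : M -> forall i, X i).
Hypothesis phil : forall (a : K) (m m' : M) i, phi (a *: m + m') i = a *: phi m i + phi m' i.
Hypothesis phic : forall (cs : {linear C -> K^o}) (m : M) i,
  phi (cact rM cs m) i = cact (rX i) cs (phi m i).
Variable m0 : M.

Definition phiL i : {linear M -> X i} :=
  HB.pack (fun m => phi m i) (GRing.isLinear.Build K M (X i) *:%R (fun m => phi m i) (fun a x y => phil a x y i)).
Lemma phi0 i : phi 0 i = 0. Proof. by have := linear0 (phiL i). Qed.
Lemma phiD x y i : phi (x + y) i = phi x i + phi y i. Proof. exact: (linearD (phiL i)). Qed.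
Lemma phiZ a x i : phi (a *: x) i = a *: phi x i. Proof. by rewrite -[LHS]/(phiL i (a *: x)) linearZ. Qed.
Lemma phiB x y i : phi (x - y) i = phi x i - phi y i. Proof. exact: (linearB (phiL i)). Qed.
Lemma phi_sum I (s : seq I) (F : I -> M) i : phi (\sum_(k <- s) F k) i = \sum_(k <- s) phi (F k) i.
Proof. exact: (linear_sum (phiL i)). Qed.
Lemma phi_lc r (u : 'I_r -> M) a i : phi (lc u a) i = \sum_j a 0 j *: phi (u j) i.
Proof. by rewrite /lc phi_sum; apply: eq_bigr => j _; rewrite phiZ. Qed.

Definition rhom := crho rM m0.
Definition nn := size rhom.
Definition vv (k : 'I_nn) : M := (nth (0, 0) rhom k).1.
Definition comb (b : 'rV[K]_nn) : M := lc vv b.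

Definition Nm (z : M) := exists g : {linear C -> K^o}, z = cact rM g m0.
Definition SubP (E : M -> Prop) := E 0 /\ forall a x y, E x -> E y -> E (a *: x + y).
Definition Stab (E : M -> Prop) := forall g x, E x -> E (cact rM g x).
Definition Fam (E : M -> Prop) := [/\ SubP E, Stab E & forall z, E z -> Nm z].
Definition Isupp (E : M -> Prop) i := exists z, E z /\ phi z i <> 0.
Definition Fin (E : M -> Prop) := exists s : seq L, forall i, Isupp E i -> List.In i s.
Definition WE (E : M -> Prop) (b : 'rV[K]_nn) := E (comb b).
Definition mu E := dimW (WE E).

Lemma N_span z : Nm z -> exists b, z = comb b.
Proof.
move=> [g ->]; exists (\row_k (g (nth (0, 0) rhom k).2 : K)).
rewrite /cact /comb /lc (big_nth (0, 0)) big_mkord; apply: eq_bigr => k _.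
by rewrite mxE.
Qed.

Lemma Sub_sum E I (s : seq I) (c : I -> K) (F : I -> M) :
  SubP E -> (forall i, E (F i)) -> E (\sum_(i <- s) c i *: F i).
Proof.
move=> [E0 El] EF; apply: big_ind => //.
  by move=> x y Ex Ey; have := El 1 _ _ Ex Ey; rewrite scale1r.
by move=> i _; have := El (c i) _ _ (EF i) E0; rewrite addr0.
Qed.

Lemma Sub_lc E r (u : 'I_r -> M) a : SubP E -> (forall j, E (u j)) -> E (lc u a).
Proof. by move=> sE Eu; apply: Sub_sum. Qed.

Lemma WE_sub E : SubP E -> subsp (WE E).
Proof.
move=> [E0 El]; split; first by rewrite /WE /comb lc0.
by move=> a x y; rewrite /WE /comb lc_lin; exact: El.
Qed.

Lemma mu_le E : (mu E <= nn)%N.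
Proof. by have [H _] := dimW_spec (WE E); exact: dimge_le H. Qed.

Lemma mu_mono E E' : (forall z, E z -> E' z) -> (mu E <= mu E')%N.
Proof. by move=> EE'; apply: dim_mono => b; exact: EE'. Qed.

Lemma mu_strict E E' : SubP E -> (forall z, E' z -> Nm z) -> (forall z, E z -> E' z) ->
  (exists z, E' z /\ ~ E z) -> (mu E < mu E')%N.
Proof.
move=> sE NE' EE' [z [E'z nEz]]; apply: dim_strict.
- exact: WE_sub.
- by move=> b; exact: EE'.
- have [b zb] := N_span (NE' _ E'z); exists b; rewrite /WE -zb; by split.
Qed.

Lemma N_fam : Fam Nm.
Proof.
split.
- split; first by exists (zerof C); rewrite cact_zerof.
  move=> a x y [g ->] [h ->]; exists (lcomb a g h); by rewrite cact_lcomb.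
- by move=> g x [h ->]; exists (conv cC g h); rewrite cact_conv.
- by [].
Qed.

Lemma zero_fam : Fam (fun z => z = 0).
Proof.
split.
- by split => // a x y -> ->; rewrite scaler0 addr0.
- by move=> g x ->; rewrite cact0.
- by move=> z ->; case: N_fam => [[]].
Qed.

Lemma exists_D : ~ Fin Nm -> exists D, [/\ Fam D, ~ Fin D &
  forall E, Fam E -> ~ Fin E -> (mu D <= mu E)%N].
Proof.
move=> nF.
have [k [[D [fD nD <-]] Hk]] := @ex_min (fun k => exists E, [/\ Fam E, ~ Fin E & mu E = k])
  (ex_intro _ _ (ex_intro _ Nm (And3 N_fam nF erefl))).
exists D; split => // E fE nE; apply: Hk; by exists E.
Qed.

Lemma exists_D1 D : Fam D -> exists D1, [/\ Fam D1, Fin D1, (forall z, D1 z -> D z) &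
  forall E, Fam E -> Fin E -> (forall z, E z -> D z) -> (mu E <= mu D1)%N].
Proof.
move=> [[D0 _] _ _].
pose P k := exists E, [/\ Fam E, Fin E, (forall z, E z -> D z) & mu E = k].
have P0 : P (mu (fun z => z = 0)).
  exists (fun z => z = 0); split => //.
  - exact: zero_fam.
  - by exists [::] => i [z [-> ]]; rewrite phi0.
  - by move=> z ->.
have PB : forall k, P k -> (k <= nn)%N by move=> j [E [_ _ _ <-]]; exact: mu_le.
have [k [[D1 [f1 F1 s1 <-]] Hk]] := @ex_max P nn (ex_intro _ _ P0) PB.
exists D1; split => // E fE FE sE; apply: Hk; by exists E.
Qed.


Section Main2.
Variables (D D1 : M -> Prop).
Hypotheses (fD : Fam D) (nFD : ~ Fin D)
  (minD : forall E, Fam E -> ~ Fin E -> (mu D <= mu E)%N)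
  (fD1 : Fam D1) (FD1 : Fin D1) (sD1 : forall z, D1 z -> D z)
  (maxD1 : forall E, Fam E -> Fin E -> (forall z, E z -> D z) -> (mu E <= mu D1)%N).

Lemma sandwich E : Fam E -> (forall z, D1 z -> E z) -> (forall z, E z -> D z) ->
  (forall z, E z -> D1 z) \/ (forall z, D z -> E z).
Proof.
move=> fE s1E sED; have [FE|nFE] := pselect (Fin E).
- left => z Ez; apply: contrapT => nz.
  have lt : (mu D1 < mu E)%N.
    apply: mu_strict => //; [by case: fD1 | by case: fE | by exists z].
  by have := maxD1 fE FE sED; rewrite leqNgt lt.
- right => z Dz; apply: contrapT => nz.
  have lt : (mu E < mu D)%N.
    apply: mu_strict => //; [by case: fE | by case: fD | by exists z].
  by have := minD fE nFE; rewrite leqNgt lt.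
Qed.

Lemma D1_zero i z : ~ Isupp D1 i -> D1 z -> phi z i = 0.
Proof. by move=> nI Dz; apply: contrapT => nz; apply: nI; exists z. Qed.

Definition J i := Isupp D i /\ ~ Isupp D1 i.

Lemma J_inf (s : seq L) : exists i, J i /\ ~ List.In i s.
Proof.
apply: contrapT => H; apply: nFD; have [s1 Hs1] := FD1.
exists (s ++ s1) => i Ii; apply: List.in_or_app.
have [I1|nI1] := pselect (Isupp D1 i); first by right; exact: Hs1.
left; apply: contrapT => nin; apply: H; exists i; split => //.
Qed.



Section Main3.
Variable i0 : L.
Hypothesis Ji0 : J i0.

Lemma KerD1 z : D z -> phi z i0 = 0 -> D1 z.
Proof.
case: fD => [[D0 Dl] Ds DN].
pose Ker z := D z /\ phi z i0 = 0.
have fK : Fam Ker.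
  split.
  - split; first by split => //; rewrite phi0.
    by move=> a x y [Dx px] [Dy py]; split; [exact: Dl | rewrite phil px py scaler0 addr0].
  - by move=> g x [Dx px]; split; [exact: Ds | rewrite phic px cact0].
  - by move=> x [Dx _]; exact: DN.
have s1 : forall x, D1 x -> Ker x.
  by move=> x D1x; split; [exact: sD1 | exact: D1_zero (proj2 Ji0) D1x].
have s2 : forall x, Ker x -> D x by move=> x [].
have [H|H] := sandwich fK s1 s2.
- by move=> Dz pz; exact: H.
- exfalso; case: Ji0 => [[x [Dx px]] _]; apply: px; by case: (H x Dx).
Qed.


Definition Abas : 'M[K]_(mu D, nn) := sval (cid (proj1 (dimW_spec (WE D)))).
Lemma Abas_spec : row_free Abas /\ forall j, WE D (row j Abas).
Proof. exact: (svalP (cid (proj1 (dimW_spec (WE D))))). Qed.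
Lemma Abas_free : row_free Abas. Proof. exact: (proj1 Abas_spec). Qed.
Lemma Abas_W j : WE D (row j Abas). Proof. exact: (proj2 Abas_spec). Qed.

Definition bv (j : 'I_(mu D)) : M := comb (row j Abas).
Lemma bv_D j : D (bv j). Proof. exact: Abas_W. Qed.

Lemma D_span z : D z -> exists c : 'rV[K]_(mu D), z = lc bv c.
Proof.
move=> Dz; case: fD => [sD _ DN]; have [b zb] := N_span (DN _ Dz).
have bA : (b <= Abas)%MS.
  apply: (max_sub (WE_sub sD) Abas_free Abas_W); by rewrite /WE -zb.
exists (b *m pinvmx Abas); rewrite zb -{1}(mulmxKpV bA) mulmx_sum_row /comb lc_sum.
rewrite [in RHS]/lc; apply: eq_bigr => i _; by rewrite lcZ.
Qed.

Definition yy : seq (X i0) := [seq phi (bv j) i0 | j <- enum 'I_(mu D)].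
Definition tbas := sval (cid (extract yy)).
Lemma tt_spec : [/\ {subset tbas <= yy}, (forall a, lcs tbas a = 0 -> a = 0) &
      (forall w, w \in yy -> exists a : 'rV[K]_(size tbas), w = lcs tbas a)].
Proof. exact: (svalP (cid (extract yy))). Qed.
Definition rr := size tbas.
Definition ee (j : 'I_rr) : X i0 := tbas`_j.

Lemma ee_in j : exists j'', ee j = phi (bv j'') i0.
Proof.
case: tt_spec => ts _ _.
have := ts (ee j) (mem_nth 0 (ltn_ord j)); case/mapP => j'' _ ->; by exists j''.
Qed.

Definition uu j : M := bv (sval (cid (ee_in j))).
Lemma uu_e j : phi (uu j) i0 = ee j. Proof. by rewrite /uu; case: cid => j'' /= ->. Qed.
Lemma uu_D j : D (uu j). Proof. exact: bv_D. Qed.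

Lemma ImgSpan z : D z -> exists a : 'rV[K]_rr, phi z i0 = lc ee a.
Proof.
move=> /D_span [c ->]; rewrite phi_lc.
have H j : exists a : 'rV[K]_rr, phi (bv j) i0 = lc ee a.
  case: tt_spec => _ _ sp; apply: sp; apply/mapP; exists j => //; by rewrite mem_enum.
exists (\sum_j c 0 j *: sval (cid (H j))); rewrite lc_sum; apply: eq_bigr => j _.
by rewrite lcZ; case: cid => a /= <-.
Qed.

Lemma ee_ind a : lc ee a = 0 -> a = 0.
Proof. by case: tt_spec => _ ind _; exact: ind. Qed.

Definition dd := sval (cid (dual_basis ee_ind)).
Lemma ddE : forall j k, dd j (ee k) = (j == k)%:R.
Proof. exact: (svalP (cid (dual_basis ee_ind))). Qed.

Lemma ee_stab : forall g k, exists a, cact (rX i0) g (ee k) = lc ee a.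
Proof.
move=> g k; rewrite -uu_e -phic; apply: ImgSpan; case: fD => _ Ds _; apply: Ds; exact: uu_D.
Qed.

Definition rSS := rS ddE ee_stab.

Definition sgm (a : 'rV[K]_rr) : M := lc uu a.
Lemma sig_D a : D (sgm a). Proof. by case: fD => sD _ _; apply: Sub_lc => // j; exact: uu_D. Qed.
Lemma sig_e a : phi (sgm a) i0 = lc ee a.
Proof. by rewrite /sgm phi_lc; apply: eq_bigr => j _; rewrite uu_e. Qed.

Lemma Fc i : ~ Isupp D1 i -> forall g a,
  phi (sgm (cact rSS g a)) i = cact (rX i) g (phi (sgm a) i).
Proof.
move=> nI g a; case: fD => [[D0 Dl] Ds _].
pose z := sgm (cact rSS g a) - cact rM g (sgm a).
have Dz : D z.
  by rewrite /z addrC -scaleN1r; apply: Dl; [apply: Ds; exact: sig_D | exact: sig_D].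
have pz : phi z i0 = 0.
  by rewrite /z phiB sig_e phic sig_e -(lc_cactS ddE ee_stab) subrr.
have := D1_zero nI (KerD1 Dz pz); rewrite /z phiB phic.
by move/eqP; rewrite subr_eq0 => /eqP.
Qed.

Lemma F_nz i : J i -> exists a, phi (sgm a) i <> 0.
Proof.
move=> [[z [Dz pz]] nI]; have [a ea] := ImgSpan Dz; exists a.
have Dz' : D (z - sgm a).
  case: fD => [[D0 Dl] _ _]; rewrite addrC -scaleN1r; apply: Dl => //; exact: sig_D.
have pz' : phi (z - sgm a) i0 = 0 by rewrite phiB ea sig_e subrr.
have := D1_zero nI (KerD1 Dz' pz'); rewrite phiB => /eqP; rewrite subr_eq0 => /eqP <-.
exact: pz.
Qed.

Lemma F_comod i : ~ Isupp D1 i -> comod_map rSS (rX i) (fun a => phi (sgm a) i).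
Proof.
move=> nI; split.
  by move=> b x y; rewrite /sgm lc_lin phil.
move=> a f g; rewrite big_map /= -lf_cact -Fc //.
have -> : cact rSS g a = \sum_(p <- crho rSS a) (g p.2 : K) *: p.1 by [].
rewrite /sgm lc_sum phi_sum linear_sum; apply: eq_bigr => p _.
by rewrite lcZ phiZ linearZ /= mulrC.
Qed.

Lemma S_simple : simple_comod rSS.
Proof.
split.
  have [a na] := F_nz Ji0; exists a => a0; apply: na.
  by rewrite a0 /sgm lc0 phi0.
move=> P [P0 [Pl Pt]].
pose P' z := D z /\ exists a, P a /\ phi z i0 = lc ee a.
have Pcact : forall g a, P a -> P (cact rSS g a).
  move=> g a Pa; have [t [te tP]] := Pt a Pa.
  rewrite /cact (tensor_act te g).
  elim: t tP {te} => [|p t IH] tP; first by rewrite big_nil.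
  rewrite big_cons; apply: Pl; first exact: (tP p (or_introl erefl)).
  by apply: IH => q hq; apply: tP; right.
have fP' : Fam P'.
  case: fD => [[D0 Dl] Ds DN]; split.
  - split.
      split => //; exists 0; split => //; by rewrite phi0 lc0.
    move=> b x y [Dx [a [Pa ea]]] [Dy [a' [Pa' ea']]]; split; first exact: Dl.
    by exists (b *: a + a'); split; [exact: Pl | rewrite phil ea ea' lc_lin].
  - move=> g x [Dx [a [Pa ea]]]; split; first exact: Ds.
    exists (cact rSS g a); split; first exact: Pcact.
    by rewrite phic ea -(lc_cactS ddE ee_stab).
  - by move=> x [Dx _]; exact: DN.
have s1 : forall z, D1 z -> P' z.
  move=> z D1z; split; first exact: sD1.
  exists 0; split => //; rewrite lc0; exact: (D1_zero (proj2 Ji0) D1z).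
have s2 : forall z, P' z -> D z by move=> z [].
case: (sandwich fP' s1 s2) => H; [left | right].
- move=> a Pa.
  have P's : P' (sgm a) by split; [exact: sig_D | exists a; split => //; exact: sig_e].
  have := D1_zero (proj2 Ji0) (H _ P's); rewrite sig_e; exact: ee_ind.
- move=> a; have [_ [a' [Pa' e]]] := H _ (sig_D a).
  by rewrite sig_e in e; rewrite (lc_inj ddE e).
Qed.


Hypothesis QF : quasi_finite_dsum rX.

Lemma big_zip (V : nmodType) (T : Type) (s1 : seq K) (s2 : seq T) (x0 : T) (G : K -> T -> V) :
  size s1 = size s2 ->
  \sum_(p <- zip s1 s2) G p.1 p.2 = \sum_(k < size s2) G s1`_k (nth x0 s2 k).
Proof.
elim: s1 s2 => [|c s1 IH] [|w s2] //=; first by rewrite big_nil big_ord0.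
move=> [e].
rewrite big_cons big_ord_recl /= (IH s2 e); congr (_ + _).
Qed.

Lemma final : False.
Proof.
have [fs [Hfs Hsp]] := QF S_simple.
pose nf := size fs.
have [idx [sidx [Hj Hd _]]] := pick_distinct J_inf nf.+1.
pose fj (j : 'I_nf.+1) (a : 'rV[K]_rr) (i : L) : X i :=
  if pselect (i = idx j) then phi (sgm a) i else 0.
have dsj : forall j, dsum_hom rX rSS (fj j).
  move=> j; split.
  - move=> a; exists [:: idx j] => i; rewrite /fj; case: pselect => [e _|_ []] //.
    by left; rewrite e.
  - move=> i; rewrite /fj; case: pselect => [e|ne].
    + subst i; apply: F_comod; exact: (proj2 (Hj j (ltn_ord j))).
    + split; first by move=> b x y; rewrite scaler0 addr0.
      move=> a f g; rewrite big_map (tz (rX i) f g).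
      by rewrite big1 // => p _; rewrite /= linear0 mul0r.
pose cs j := cid (Hsp (fj j) (dsj j)).
pose Am : 'M[K]_(nf.+1, nf) := \matrix_(j, k) (sval (cs j))`_k.
have kn : kermx Am != 0.
  rewrite kermx_eq0 /row_free; apply/negP => /eqP H.
  by have := rank_leq_col Am; rewrite H ltnn.
have [j1 nj1] : exists j1, row j1 (kermx Am) != 0.
  apply: contrapT => H; move/eqP: kn; apply; apply/row_matrixP => j.
  rewrite row0; apply/eqP; apply: contrapT => /negP nz; apply: H; by exists j.
pose lam := row j1 (kermx Am).
have lam0 : lam *m Am = 0 by rewrite /lam -row_mul mulmx_ker row0.
have [j0 nj0] : exists j0, lam 0 j0 != 0.
  apply: contrapT => H; move/negP: nj1; apply; apply/eqP/rowP => j.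
  rewrite [RHS]mxE; apply: contrapT => nz; apply: H; exists j; exact/eqP.
have [a na] := F_nz (Hj j0 (ltn_ord j0)).
have fjE : forall (j : 'I_nf.+1) a', fj j a' (idx j) = phi (sgm a') (idx j).
  by move=> j a'; rewrite /fj; case: pselect => // [[]].
have fj0 : forall (j : 'I_nf.+1) a' i', i' <> idx j -> fj j a' i' = 0.
  by move=> j a' i' ne; rewrite /fj; case: pselect.
pose i := idx j0.
pose T := \sum_j lam 0 j *: fj j a i.
have T1 : T = lam 0 j0 *: phi (sgm a) i.
  rewrite /T (bigD1 j0) //= big1 ?addr0; first by rewrite fjE.
  move=> j nj; rewrite fj0 ?scaler0 // => e.
  move/eqP: nj; apply; apply: val_inj.
  apply: (Hd _ _ (ltn_ord j) (ltn_ord j0)); exact: (esym e).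
have T2 : T = 0.
  rewrite /T.
  have -> : \sum_j lam 0 j *: fj j a i =
      \sum_j lam 0 j *: \sum_(k < nf) (sval (cs j))`_k *: (nth (fun _ _ => 0) fs k) a i.
    apply: eq_bigr => j _; congr (_ *: _).
    case: (cs j) => c [sc Hc] /=; rewrite Hc.
    exact: (big_zip (fun _ _ => 0) (fun (x : K) (f : 'rV[K]_rr -> forall i, X i) => x *: f a i)).
  under eq_bigr do rewrite scaler_sumr.
  rewrite exchange_big /=; apply: big1 => k _.
  rewrite (eq_bigr (fun j => (lam 0 j * (sval (cs j))`_k) *: nth (fun _ _ => 0) fs k a i)); last first.
    by move=> j _; rewrite scalerA.
  rewrite -scaler_suml.
  have -> : \sum_j lam 0 j * (sval (cs j))`_k = 0.
    have e0 : (lam *m Am) 0 k = 0.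
      by rewrite lam0 mxE.
    rewrite -[RHS]e0 mxE; apply: eq_bigr => j _; congr (_ * _); by rewrite mxE.
  by rewrite scale0r.
have := T1; rewrite T2 => /esym /eqP; rewrite scaler_eq0 (negbTE nj0) /=.
by move/eqP.
Qed.

End Main3.
End Main2.
End Main1.

Lemma hard_dir (K : fieldType) (C : lmodType K) (cC : coalgebra C)
  (L : Type) (X : L -> lmodType K) (rX : forall i, comodule cC (X i)) :
  quasi_finite_dsum rX -> forall x, in_Rat_prod rX x -> fin_supp x.
Proof.
move=> QF x [M [rM [phi [phil [_ [phic [m0 hm]]]]]]].
apply: contrapT => nfs.
have nFN : ~ Fin phi (Nm rM m0).
  move=> [s Hs]; apply: nfs; exists s => i xi; apply: Hs; exists m0; split.
    by exists (ceps cC); rewrite cact_eps.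
  by rewrite hm.
have [D [fD nFD minD]] := exists_D nFN.
have [D1 [fD1 FD1 sD1 maxD1]] := exists_D1 phil fD.
have [i0 [Ji0 _]] := J_inf nFD FD1 [::].
exact: (final phil phic fD nFD minD fD1 FD1 sD1 maxD1 Ji0 QF).
Qed.

Set Implicit Arguments.

Section Prod.
Variables (K : fieldType) (C : lmodType K) (cC : coalgebra C).
Variables (A B : lmodType K) (rA : comodule cC A) (rB : comodule cC B).

Definition inl_lin : linear (fun a : A => ((a, 0) : (A * B)%type)).
Proof.
move=> c x y; transitivity ((c *: x + y, c *: (0 : B) + 0) : (A * B)%type) => //.
by rewrite scaler0 addr0.
Qed.
Definition inr_lin : linear (fun b : B => ((0, b) : (A * B)%type)).
Proof.
move=> c x y; transitivity ((c *: (0 : A) + 0, c *: x + y) : (A * B)%type) => //.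
by rewrite scaler0 addr0.
Qed.

Lemma fl_lin (f : {linear (A * B)%type -> K^o}) : linear (fun a : A => f (a, 0)).
Proof. move=> c x y; exact: (etrans (congr1 f (inl_lin c x y)) (linearP f c _ _)). Qed.
Lemma fr_lin (f : {linear (A * B)%type -> K^o}) : linear (fun b : B => f (0, b)).
Proof. move=> c x y; exact: (etrans (congr1 f (inr_lin c x y)) (linearP f c _ _)). Qed.
Definition fl f : {linear A -> K^o} := mklin (fl_lin f).
Definition fr f : {linear B -> K^o} := mklin (fr_lin f).

Definition rhoP (x : (A * B)%type) : seq ((A * B)%type * C) :=
  [seq ((p.1, 0), p.2) | p <- crho rA x.1] ++ [seq ((0, q.1), q.2) | q <- crho rB x.2].

Lemma rhoP_sum (R : nmodType) (F : (A * B)%type * C -> R) x :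
  \sum_(p <- rhoP x) F p =
  \sum_(p <- crho rA x.1) F ((p.1, 0), p.2) + \sum_(q <- crho rB x.2) F ((0, q.1), q.2).
Proof. by rewrite big_cat !big_map. Qed.

Lemma lfZ' (V : lmodType K) (f : {linear V -> K^o}) c v : (f (c *: v) : K) = c * f v.
Proof. by rewrite linearZ. Qed.

Lemma rhoP_lin (a : K) (x y : (A * B)%type) :
  tensor_eq (rhoP (a *: x + y)) ([seq (a *: p.1, p.2) | p <- rhoP x] ++ rhoP y).
Proof.
move=> f g; rewrite [LHS]rhoP_sum big_cat big_map !rhoP_sum /=.
have hA := crho_lin rA a x.1 y.1 (fl f) g.
have hB := crho_lin rB a x.2 y.2 (fr f) g.
rewrite big_cat big_map /= in hA; rewrite big_cat big_map /= in hB.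
rewrite [X in X + _ = _]hA [X in _ + X = _]hB.
have eA : \sum_(j <- crho rA x.1) (f (a *: j.1, 0) : K) * g j.2 =
          \sum_(j <- crho rA x.1) (f (a *: (j.1, 0)) : K) * g j.2.
  apply: eq_bigr => p _; congr (f _ * _).
  by transitivity ((a *: p.1, a *: (0 : B)) : (A * B)%type); [rewrite scaler0 |].
have eB : \sum_(j <- crho rB x.2) (f (0, a *: j.1) : K) * g j.2 =
          \sum_(j <- crho rB x.2) (f (a *: (0, j.1)) : K) * g j.2.
  apply: eq_bigr => p _; congr (f _ * _).
  by transitivity ((a *: (0 : A), a *: p.1) : (A * B)%type); [rewrite scaler0 |].
rewrite eA eB.
by rewrite addrACA.
Qed.

Lemma rhoP_coassoc (m : (A * B)%type) (f : {linear (A * B)%type -> K^o}) (g h : {linear C -> K^o}) :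
    \sum_(p <- rhoP m)
        ((\sum_(q <- rhoP p.1) ((f q.1 : K) * (g q.2 : K))) * (h p.2 : K)) =
    \sum_(p <- rhoP m)
        ((f p.1 : K) * (\sum_(q <- cDelta cC p.2) ((g q.1 : K) * (h q.2 : K)))).
Proof.
rewrite !rhoP_sum /=.
have e1 : forall u : A, \sum_(q <- rhoP (u, 0)) (f q.1 : K) * g q.2 =
    \sum_(q <- crho rA u) (fl f q.1 : K) * g q.2.
  move=> u; rewrite rhoP_sum /= (tz rB (fr f) g) addr0.
  by apply: eq_bigr.
have e2 : forall w : B, \sum_(q <- rhoP (0, w)) (f q.1 : K) * g q.2 =
    \sum_(q <- crho rB w) (fr f q.1 : K) * g q.2.
  move=> w; rewrite rhoP_sum /= (tz rA (fl f) g) add0r.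
  by apply: eq_bigr.
under eq_bigr do rewrite e1.
under [X in _ + X = _]eq_bigr do rewrite e2.
congr (_ + _).
- exact: (crho_coassoc rA m.1 (fl f) g h).
- exact: (crho_coassoc rB m.2 (fr f) g h).
Qed.

Lemma pair_sum I (s : seq I) (F : I -> A) (G : I -> B) :
  \sum_(i <- s) ((F i, G i) : (A * B)%type) = (\sum_(i <- s) F i, \sum_(i <- s) G i).
Proof.
elim: s => [|i s IH]; first by rewrite !big_nil.
by rewrite !big_cons IH.
Qed.

Lemma rhoP_counit (m : (A * B)%type) : m = \sum_(p <- rhoP m) ((ceps cC p.2 : K) *: p.1).
Proof.
rewrite rhoP_sum /= !pair_sum.
case: m => m1 m2 /=.
have z1 : \sum_(i <- crho rA m1) (ceps cC i.2 : K) *: (0 : B) = 0.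
  by rewrite big1 // => p _; rewrite scaler0.
have z2 : \sum_(i <- crho rB m2) (ceps cC i.2 : K) *: (0 : A) = 0.
  by rewrite big1 // => p _; rewrite scaler0.
rewrite z1 z2 -!crho_counit.
by transitivity ((m1 + 0, 0 + m2) : (A * B)%type); [rewrite addr0 add0r |].
Qed.

Definition rP : comodule cC (A * B)%type := Comodule rhoP_lin rhoP_coassoc rhoP_counit.

Lemma cact_rP g (m : (A * B)%type) : cact rP g m = (cact rA g m.1, cact rB g m.2).
Proof.
rewrite /cact /= rhoP_sum /= !pair_sum.
have z1 : \sum_(i <- crho rA m.1) (g i.2 : K) *: (0 : B) = 0.
  by rewrite big1 // => p _; rewrite scaler0.
have z2 : \sum_(i <- crho rB m.2) (g i.2 : K) *: (0 : A) = 0.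
  by rewrite big1 // => p _; rewrite scaler0.
rewrite z1 z2.
have pe : forall (u : A) (w : B), ((u, 0) + (0, w) : (A * B)%type) = (u, w).
  move=> u w; transitivity ((u + 0, 0 + w) : (A * B)%type) => //.
  by rewrite addr0 add0r.
by rewrite pe.
Qed.

End Prod.

Unset Implicit Arguments.
Section Easy.
Variables (K : fieldType) (C : lmodType K) (cC : coalgebra C).
Variables (L : Type) (X : L -> lmodType K) (rX : forall i, comodule cC (X i)).

Lemma r0_lin (a : K) (x y : 'rV[K]_0) :
  tensor_eq ((fun _ : 'rV[K]_0 => [::] : seq ('rV[K]_0 * C)) (a *: x + y))
    ([seq (a *: p.1, p.2) | p <- (fun _ : 'rV[K]_0 => [::] : seq ('rV[K]_0 * C)) x] ++
     (fun _ : 'rV[K]_0 => [::] : seq ('rV[K]_0 * C)) y).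
Proof. by move=> f g; rewrite /= !big_nil. Qed.

Lemma r0_coassoc (m : 'rV[K]_0) (f : {linear 'rV[K]_0 -> K^o}) (g h : {linear C -> K^o}) :
    \sum_(p <- ([::] : seq ('rV[K]_0 * C)))
        ((\sum_(q <- ([::] : seq ('rV[K]_0 * C))) ((f q.1 : K) * (g q.2 : K))) * (h p.2 : K)) =
    \sum_(p <- ([::] : seq ('rV[K]_0 * C)))
        ((f p.1 : K) * (\sum_(q <- cDelta cC p.2) ((g q.1 : K) * (h q.2 : K)))).
Proof. by rewrite !big_nil. Qed.

Lemma r0_counit (m : 'rV[K]_0) :
  m = \sum_(p <- ([::] : seq ('rV[K]_0 * C))) ((ceps cC p.2 : K) *: p.1).
Proof. by rewrite big_nil; apply: thinmx0. Qed.

Definition r0 : comodule cC 'rV[K]_0 :=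
  @Comodule K C cC 'rV[K]_0 (fun _ => [::]) r0_lin r0_coassoc r0_counit.

Fixpoint prodT (s : seq L) : lmodType K :=
  match s with [::] => 'rV[K]_0 | i :: s' => (X i * prodT s')%type end.

Fixpoint prodC (s : seq L) : comodule cC (prodT s) :=
  match s return comodule cC (prodT s) with
  | [::] => r0
  | i :: s' => rP (rX i) (prodC s')
  end.

Fixpoint emb (s : seq L) : prodT s -> forall j, X j :=
  match s return prodT s -> forall j, X j with
  | [::] => fun _ _ => 0
  | i :: s' => fun m j =>
      (if pselect (j = i) is left e then eq_rect i X m.1 j (esym e) else 0) + emb s' m.2 j
  end.

Fixpoint proj (s : seq L) (x : forall j, X j) : prodT s :=
  match s return prodT s with
  | [::] => 0
  | i :: s' => (x i, proj s' x)
  end.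

Lemma emb_lin s a (m m' : prodT s) j : emb s (a *: m + m') j = a *: emb s m j + emb s m' j.
Proof.
elim: s m m' => [|i s IH] m m' /=; first by rewrite scaler0 addr0.
rewrite IH scalerDr addrACA; congr (_ + _).
case: pselect => [e|ne]; last by rewrite scaler0 addr0.
by subst j.
Qed.

Lemma emb_out s (m : prodT s) j : ~ List.In j s -> emb s m j = 0.
Proof.
elim: s m => [|i s IH] m //= nin.
rewrite IH; last by move=> h; apply: nin; right.
case: pselect => [e|_]; last by rewrite addr0.
by exfalso; apply: nin; left.
Qed.

Lemma emb_proj s x j : List.NoDup s -> List.In j s -> emb s (proj s x) j = x j.
Proof.
elim: s => [|i s IH] //= /List.NoDup_cons_iff [nis nd] hin.
case: pselect => [e|ne].
  by subst j; rewrite emb_out // addr0.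
rewrite add0r IH //; case: hin => // e; by exfalso; apply: ne.
Qed.

Lemma emb_inj s (m m' : prodT s) : List.NoDup s -> (forall j, emb s m j = emb s m' j) -> m = m'.
Proof.
elim: s m m' => [|i s IH] m m' /=.
  by move=> _ _; rewrite (thinmx0 m) (thinmx0 m').
move=> /List.NoDup_cons_iff [nis nd] H.
case: m H => m1 m2; case: m' => m1' m2' /= H.
have h1 : m1 = m1'.
  have := H i; case: pselect => [e|[]] //.
  have -> : e = erefl by apply: Prop_irrelevance.
  by rewrite /= !emb_out // !addr0.
have h2 : m2 = m2'.
  apply: IH => // j; have := H j; case: pselect => [e|_].
    by subst j; rewrite !emb_out.
  by rewrite !add0r.
by rewrite h1 h2.
Qed.

Lemma emb_cact s g (m : prodT s) j :
  emb s (cact (prodC s) g m) j = cact (rX j) g (emb s m j).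
Proof.
elim: s m => [|i s IH] m /=; first by rewrite cact0.
rewrite cact_rP /= IH cactD; congr (_ + _).
case: pselect => [e|_]; last by rewrite cact0.
by subst j.
Qed.

Lemma nodup_cover (s0 : seq L) : exists s, List.NoDup s /\ forall j, List.In j s0 -> List.In j s.
Proof.
elim: s0 => [|i s0 [s [nd cov]]]; first by exists [::]; split => //; constructor.
have [ins|nins] := pselect (List.In i s).
  by exists s; split => // j [<-|/cov].
exists (i :: s); split; first by constructor.
by move=> j [<-|/cov h]; [left|right].
Qed.

Lemma easy_dir x : fin_supp x -> in_Rat_prod rX x.
Proof.
move=> [s0 H]; have [s [nd cov]] := nodup_cover s0.
exists (prodT s), (prodC s), (emb s); split; first exact: emb_lin.
split; first by move=> m m'; exact: emb_inj.
split; first by move=> cs m i; exact: emb_cact.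
exists (proj s x) => j.
have [ins|nins] := pselect (List.In j s); first exact: emb_proj.
rewrite emb_out //; apply: contrapT => nz; apply: nins; apply: cov; apply: H => h.
by apply: nz; rewrite h.
Qed.

End Easy.

End Aux.

Unset Implicit Arguments.

Theorem lemma2p5 (K : fieldType) (C : lmodType K) (cC : coalgebra C)
  (L : Type) (X : L -> lmodType K) (rX : forall i, comodule cC (X i)) :
  (forall i, exists x : X i, x <> 0) ->
  quasi_finite_dsum rX ->
  forall x : (forall i, X i), in_Rat_prod rX x <-> fin_supp x.
Proof.
move=> _ QF x; split.
- exact: (Aux.hard_dir QF).
- exact: (Aux.easy_dir K C cC L X rX x).
Qed.
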